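(* Let $\Omega$ be a finite set, $f:2^{\Omega}\to\mathbb{R}_{+}$ nonnegative and increasing, $K\in\{1,\dots,|\Omega|\}$ and $L\in\{0,\dots,|\Omega|\}$. Let $\widehat{\mathcal{S}}_K\in\arg\max\{f(\mathcal{S}):|\mathcal{S}|\le K\}$, let $\mathcal{S}_0,\dots,\mathcal{S}_L$ be the greedy sets and $\mathscr{C}_L=\{\emptyset,\mathcal{S}_1,\dots,\mathcal{S}_L\}$. Then $$f(\mathcal{S}_L)\ge\min\Big\{f(\widehat{\mathcal{S}}_K),\ (1-(1-1/K)^L)\big[f(\widehat{\mathcal{S}}_K)-\min\{\widehat{\mathcal{I}}^{\mathscr{C}_L,K}[f],f(\widehat{\mathcal{S}}_K)\}\big]\Big\}.$$
   Context: Greedy algorithm: $\mathcal{S}_0=\emptyset$ and $\mathcal{S}_{\ell+1}=\mathcal{S}_\ell\cup\{s_{\ell+1}\}$ with $s_{\ell+1}\in\arg\max_{s\in\Omega\setminus\mathcal{S}_\ell}f(\mathcal{S}_\ell\cup\{s\})$. Local submodularity index: $\phi^{\mathcal{A},\mathcal{B}}[f]=[f(\mathcal{A}\cup\mathcal{B})-f(\mathcal{A})]-\sum_{s\in\mathcal{B}}[f(\mathcal{A}\cup\{s\})-f(\mathcal{A})]$. For a collection $\mathscr{C}$ of subsets of $\Omega$, $\widehat{\mathcal{I}}^{\mathscr{C},K}[f]=\max\{\phi^{\mathcal{A},\mathcal{B}}[f]:\mathcal{A}\in\mathscr{C},\mathcal{B}\subseteq\Omega,\mathcal{A}\cap\mathcal{B}=\emptyset,2\le|\mathcal{B}|\le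 K\}$, and $\widehat{\mathcal{I}}^{\mathscr{C},K}[f]=0$ if no such pair exists. *)

(* Defs.v *)
From HB Require Import structures.
From mathcomp Require Import all_boot all_order all_algebra.
Set Implicit Arguments. Unset Strict Implicit. Unset Printing Implicit Defensive.
Import Order.TTheory GRing.Theory Num.Theory.
Local Open Scope ring_scope.

Definition phi_idx (R : numDomainType) (T : finType) (f : {set T} -> R)
    (A B : {set T}) : R :=
  (f (A :|: B) - f A) - \sum_(s in B) (f (s |: A) - f A).

Definition phi_vals (R : numDomainType) (T : finType) (C : {set {set T}})
    (K : nat) (f : {set T} -> R) : seq R :=
  [seq phi_idx f AB.1 AB.2 |
     AB <- [seq (A, B) | A <- enum C, B <- enum [set: {set T}]]
     & (AB.1 :&: AB.2 == set0) && (2 <= #|AB.2| <= K)%N].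

(* \hat I^{C,K}[f]: the maximum of the values above, 0 if there is none. *)
Definition loc_sub_index (R : realDomainType) (T : finType) (C : {set {set T}})
    (K : nat) (f : {set T} -> R) : R :=
  match phi_vals C K f with
  | [::] => 0
  | x :: s => foldr Num.max x s
  end.

Definition greedy_seq (R : realDomainType) (T : finType) (f : {set T} -> R)
    (S : nat -> {set T}) (L : nat) : Prop :=
  S 0%N = set0 /\
  forall l, (l < L)%N ->
    exists2 s, s \notin S l &
      S l.+1 = s |: S l /\
      (forall s', s' \notin S l -> f (s' |: S l) <= f (S l.+1)).

(* Main.v *)
Require Import Defs.
From HB Require Import structures.
From mathcomp Require Import all_boot all_order all_algebra.
From mathcomp Require Import lra.
Import Order.TTheory GRing.Theory Num.Theory.
Local Open Scope ring_scope.

Lemma foldr_max_ge (R : realDomainType) (x y : R) (s : seq R) :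
  y \in x :: s -> y <= foldr Num.max x s.
Proof.
elim: s y => [|a s IH] y /=.
  by rewrite inE => /eqP ->.
rewrite !inE => /orP [/eqP ->|/orP [/eqP ->|H]].
- by rewrite le_max (IH _ (mem_head _ _)) orbT.
- by rewrite le_max lexx.
- by rewrite le_max (IH _ _) ?orbT // inE H orbT.
Qed.

Lemma phi_le_index (R : realDomainType) (T : finType) (C : {set {set T}})
    (K : nat) (f : {set T} -> R) (A B : {set T}) :
  A \in C -> A :&: B = set0 -> (2 <= #|B| <= K)%N ->
  phi_idx f A B <= loc_sub_index C K f.
Proof.
move=> AC dAB cB.
have Hin : phi_idx f A B \in phi_vals C K f.
  rewrite /phi_vals.
  apply/mapP; exists (A, B) => //.
  rewrite mem_filter /= dAB eqxx cB /=.
  by apply: (allpairs_f (fun a b => (a, b))); rewrite mem_enum ?in_setT.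
rewrite /loc_sub_index; move: Hin; case: (phi_vals C K f) => [//|x s].
exact: foldr_max_ge.
Qed.

Theorem mainTheorem14 (R : realFieldType) (T : finType) (f : {set T} -> R)
    (K L : nat) (SK : {set T}) (Sg : nat -> {set T}) :
  (forall A, 0 <= f A) ->
  (forall A B : {set T}, A \subset B -> f A <= f B) ->
  (1 <= K <= #|T|)%N ->
  (L <= #|T|)%N ->
  (#|SK| <= K)%N ->
  (forall A : {set T}, (#|A| <= K)%N -> f A <= f SK) ->
  greedy_seq f Sg L ->
  let CL := [set Sg (nat_of_ord l) | l : 'I_L.+1] in
  f (Sg L) >= Num.min (f SK)
     ((1 - (1 - K%:R^-1) ^+ L) * (f SK - Num.min (loc_sub_index CL K f) (f SK))).
Proof.
move=> f0 fmon /andP [K1 _] _ cSK _ [S0 Hg]; cbv zeta.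
set CL := [set Sg (nat_of_ord l) | l : 'I_L.+1].
set OPT := f SK.
set J := loc_sub_index CL K f.
have chain : forall m, (m <= L)%N -> forall l, (l <= m)%N -> Sg l \subset Sg m.
  elim=> [|m IH] mL l.
    by rewrite leqn0 => /eqP ->.
  rewrite leq_eqVlt => /orP [/eqP -> //|lm].
  apply: subset_trans (IH (ltnW mL) l lm) _.
  have [s _ [-> _]] := Hg m mL.
  exact: subsetUr.
case: (leP OPT (f (Sg L))) => [hOPT|hlt].
  by rewrite ge_min hOPT.
case: (leP OPT J) => hJ.
  by rewrite subrr mulr0 ge_min (f0 _) orbT.
have fltL : forall l, (l <= L)%N -> f (Sg l) < OPT.
  move=> l lL; apply: le_lt_trans hlt; exact/fmon/chain.
have Kpos : 0 < K%:R :> R by rewrite ltr0n.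
set k := K%:R^-1 : R.
have k0 : 0 <= k by rewrite invr_ge0 ltW.
have k1 : 1 - k >= 0 by rewrite subr_ge0 invf_le1 // ler1n.
have kK : k * K%:R = 1 by rewrite mulVf // gt_eqF.
have step : forall l, (l < L)%N ->
    OPT - J - f (Sg l.+1) <= (1 - k) * (OPT - J - f (Sg l)).
  move=> l lL.
  have [s sS [Se Smax]] := Hg l lL.
  set S := Sg l.
  set B := SK :\: S.
  have Delta0 : f S <= f (Sg l.+1) by apply: fmon; rewrite Se subsetUr.
  have cB : (#|B| <= K)%N by apply: leq_trans cSK; apply: subset_leq_card; apply: subsetDl.
  have cB2 : (2 <= #|B|)%N.
    case: (ltnP #|B| 2) => // hB.
    exfalso.
    move: hB; rewrite ltnS leq_eqVlt ltnS leqn0 => /orP [/cards1P [x Bx]|/eqP/cards0_eq B0].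
      have xS : x \notin S by have := set11 x; rewrite -Bx inE => /andP [].
      have : OPT <= f (Sg l.+1).
        apply: le_trans (Smax x xS); apply: fmon.
        apply/subsetP => y ySK; rewrite in_setU1.
        case: (boolP (y \in S)) => yS; first by rewrite orbT.
        have : y \in B by rewrite inE yS ySK.
        by rewrite Bx inE => ->.
      by rewrite leNgt fltL.
    have : OPT <= f S.
      apply: fmon; apply/subsetP => y ySK.
      case: (boolP (y \in S)) => // yS.
      have : y \in B by rewrite inE yS ySK.
      by rewrite B0 inE.
    by rewrite leNgt fltL // ltnW.
  have SC : S \in CL by apply: (imset_f (fun l : 'I_L.+1 => Sg l) (x := Ordinal (ltnW lL : (l < L.+1)%N))).
  have dSB : S :&: B = set0.
    apply/setP => y; rewrite !inE; by case: (y \in S).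
  have hphi := @phi_le_index _ _ CL K f S B SC dSB (introT andP (conj cB2 cB)).
  rewrite /phi_idx in hphi.
  have hU : OPT <= f (S :|: B).
    apply: fmon; apply/subsetP => y ySK; rewrite inE.
    case: (boolP (y \in S)) => yS //=.
    by rewrite inE yS ySK.
  have hsum : \sum_(s0 in B) (f (s0 |: S) - f S) <= #|B|%:R * (f (Sg l.+1) - f S).
    rewrite -sum1_card natr_sum mulr_suml.
    apply: ler_sum => y yB; rewrite mul1r lerD2r.
    apply: Smax; move: yB; rewrite inE; by case/andP.
  have hK : #|B|%:R * (f (Sg l.+1) - f S) <= K%:R * (f (Sg l.+1) - f S).
    apply: ler_wpM2r; first by rewrite subr_ge0.
    by rewrite ler_nat.
  have main : OPT - J - f S <= K%:R * (f (Sg l.+1) - f S).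
    move: hphi hU hsum hK; fold J; lra.
  have : k * (OPT - J - f S) <= f (Sg l.+1) - f S.
    have := ler_wpM2l k0 main; by rewrite mulrA kK mul1r.
  move=> H; rewrite mulrBl mul1r.
  move: H; lra.
have ind : forall l, (l <= L)%N ->
    OPT - J - f (Sg l) <= (1 - k) ^+ l * (OPT - J - f (Sg 0)).
  elim=> [|l IH] lL; first by rewrite expr0 mul1r.
  apply: le_trans (step l lL) _.
  rewrite exprS -mulrA.
  apply: ler_wpM2l => //.
  exact: IH (ltnW lL).
have fin := ind L (leqnn L).
have c0 : 0 <= (1 - k) ^+ L by rewrite exprn_ge0.
have fin2 : (1 - k) ^+ L * (OPT - J - f (Sg 0)) <= (1 - k) ^+ L * (OPT - J).
  apply: ler_wpM2l => //; have := f0 (Sg 0); lra.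
rewrite ge_min; apply/orP; right.
rewrite mulrBl mul1r.
move: fin fin2; lra.
Qed.
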